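(* Let $A$ be a commutative ring, let $a_1,\ldots,a_n\in A$, let $u\in A^\times$, $b\in A$, and let $\beta:=h(u)y(ub)\in C(A)$. Then there exist unique $b_1,\ldots,b_n\in A$ satisfying \[\epsilon(b_i)\cdots\epsilon(b_1)=h(u)^{(-1)^{i-1}}\epsilon(a_i)\cdots\epsilon(a_1)\beta\quad\text{in }C(A)\text{ for all }1\le i\le n.\] Furthermore, $b_1=a_1u^2+bu$ and $b_i=u^{2(-1)^{i-1}}a_i$ for all $i\ge2$.
   Context: $C(A)$ is the group with generators $\epsilon(a)$, $a\in A$, and relations: with $h(u):=\epsilon(-u)\epsilon(-u^{-1})\epsilon(-u)$ for $u\in A^\times$, (1) $h(u)h(v)=h(uv)$; (2) $\epsilon(a)\epsilon(0)\epsilon(b)=h(-1)\epsilon(a+b)$; (3) $h(u)\epsilon(a)h(u)=\epsilon(u^2a)$. For $a\in A$, $y(a):=\epsilon(0)^3\epsilon(a)$. *)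

(* Defs.v *)
From HB Require Import structures.
From mathcomp Require Import all_boot all_order all_algebra.
Set Implicit Arguments. Unset Strict Implicit. Unset Printing Implicit Defensive.
Import GRing.Theory.
Local Open Scope ring_scope.

(* The group C(A), given by generators eps(a), a in A, and relations,
   is realised as the type of group terms in the generators modulo the
   smallest congruence containing the group axioms and the relations. *)

Section CA.
Variable A : comUnitRingType.

Inductive cterm : Type :=
| Eps of A
| One
| Mul of cterm & cterm
| Inv of cterm.

Definition hC (u : A) : cterm :=
  Mul (Mul (Eps (- u)) (Eps (- u^-1))) (Eps (- u)).

Inductive ceq : cterm -> cterm -> Prop :=
| ceq_refl x : ceq x x
| ceq_sym x y : ceq x y -> ceq y x
| ceq_trans x y z : ceq x y -> ceq y z -> ceq x z
| ceq_Mul x x' y y' : ceq x x' -> ceq y y' -> ceq (Mul x y) (Mul x' y')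
| ceq_Inv x x' : ceq x x' -> ceq (Inv x) (Inv x')
| ceq_assoc x y z : ceq (Mul (Mul x y) z) (Mul x (Mul y z))
| ceq_1l x : ceq (Mul One x) x
| ceq_1r x : ceq (Mul x One) x
| ceq_Vl x : ceq (Mul (Inv x) x) One
| ceq_Vr x : ceq (Mul x (Inv x)) One
| ceq_rel1 u v : u \is a GRing.unit -> v \is a GRing.unit ->
    ceq (Mul (hC u) (hC v)) (hC (u * v))
| ceq_rel2 a b : ceq (Mul (Mul (Eps a) (Eps 0)) (Eps b)) (Mul (hC (-1)) (Eps (a + b)))
| ceq_rel3 u a : u \is a GRing.unit ->
    ceq (Mul (Mul (hC u) (Eps a)) (hC u)) (Eps (u ^+ 2 * a)).

Definition yC (a : A) : cterm :=
  Mul (Mul (Mul (Eps 0) (Eps 0)) (Eps 0)) (Eps a).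

(* eprod f m = eps(f (m-1)) ... eps(f 0) (indices as ordinals of 'I_n) *)
Fixpoint eprod (n : nat) (f : 'I_n -> A) (m : nat) : cterm :=
  match m with
  | 0 => One
  | m'.+1 =>
      match @insub nat (fun k => (k < n)%N) 'I_n m' with
      | Some i => Mul (Eps (f i)) (eprod f m')
      | None => eprod f m'
      end
  end.

End CA.

(* Main.v *)
Require Import Defs.
From mathcomp Require Import all_boot all_order all_algebra.
From mathcomp Require Import ring.
Import GRing.Theory.
Local Open Scope ring_scope.

Section Aux.
Variable A : comUnitRingType.

Record m2 := M2 { m11 : A; m12 : A; m21 : A; m22 : A }.

Definition mmul (p q : m2) : m2 :=
  M2 (m11 p * m11 q + m12 p * m21 q) (m11 p * m12 q + m12 p * m22 q)
     (m21 p * m11 q + m22 p * m21 q) (m21 p * m12 q + m22 p * m22 q).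
Definition madj (p : m2) : m2 := M2 (m22 p) (- m12 p) (- m21 p) (m11 p).
Definition mdet (p : m2) : A := m11 p * m22 p - m12 p * m21 p.
Definition mE (a : A) : m2 := M2 a 1 (-1) 0.
Definition mI : m2 := M2 1 0 0 1.

Fixpoint interp (x : cterm A) : m2 :=
  match x with
  | Eps a => mE a
  | One => mI
  | Mul x y => mmul (interp x) (interp y)
  | Inv x => madj (interp x)
  end.

Lemma det_interp x : mdet (interp x) = 1.
Proof.
elim: x => [a||x IHx y IHy|x IHx] /=; rewrite /mdet /=.
- ring.
- ring.
- move: IHx IHy; case: (interp x) => ? ? ? ?; case: (interp y) => ? ? ? ?.
  rewrite /mdet /mmul /= => Hx Hy. rewrite -[RHS](mulr1 1) -{1}Hx -Hy; ring.
- move: IHx; case: (interp x) => ? ? ? ?; rewrite /mdet /madj /= => Hx. by rewrite -Hx; ring.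
Qed.

Lemma interp_h (v : A) : v \is a GRing.unit ->
  mmul (mmul (mE (- v)) (mE (- v^-1))) (mE (- v)) = M2 v 0 0 v^-1.
Proof.
move=> hv; have H : v * v^-1 = 1 by rewrite mulrV.
rewrite /mmul /mE /=; congr M2; ring: H.
Qed.

Lemma interp_sound x y : ceq x y -> interp x = interp y.
Proof.
elim=> //=; clear x y.
- by move=> x y z _ -> _ ->.
- by move=> x x' y y' _ -> _ ->.
- by move=> x x' _ ->.
- move=> x y z; rewrite /mmul /=; congr M2; ring.
- move=> x; case: (interp x) => *; rewrite /mmul /=; congr M2; ring.
- move=> x; case: (interp x) => *; rewrite /mmul /=; congr M2; ring.
- move=> x; have := det_interp x; case: (interp x) => ? ? ? ?.
  rewrite /mdet /mmul /= => H; congr M2; try ring; rewrite -H; ring.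
- move=> x; have := det_interp x; case: (interp x) => ? ? ? ?.
  rewrite /mdet /mmul /= => H; congr M2; try ring; rewrite -H; ring.
- move=> u v hu hv.
  rewrite !interp_h ?unitrM ?hu ?hv //.
  rewrite /mmul /= invrM // ; congr M2; ring.
- move=> a b; rewrite interp_h ?unitrN1 // invrN1.
  rewrite /mmul /mE /=; congr M2; ring.
- move=> u a hu; rewrite interp_h //.
  have H : u * u^-1 = 1 by rewrite mulrV.
  rewrite /mmul /mE /=; congr M2; ring: H.
Qed.

Lemma mE_inj x y X : mmul (mE x) X = mmul (mE y) X -> mdet X = 1 -> x = y.
Proof.
case: X => p q r s; rewrite /mmul /mE /mdet /= => E D; case: E => H1 H2.
have {}H1 : x * p = y * p by apply: (addIr (1 * r)).
have {}H2 : x * q = y * q by apply: (addIr (1 * s)).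
transitivity (x * (p * s - q * r)); first by rewrite D mulr1.
transitivity ((x * p) * s - (x * q) * r); first by ring.
rewrite H1 H2; transitivity (y * (p * s - q * r)); first by ring.
by rewrite D mulr1.
Qed.

Fixpoint flat (x : cterm A) : seq (cterm A) :=
  match x with
  | Mul x y => flat x ++ flat y
  | One => [::]
  | z => [:: z]
  end.
Fixpoint prod (l : seq (cterm A)) : cterm A :=
  match l with [::] => (One A) | z :: l => Mul z (prod l) end.

Lemma ceq_prod_cat l1 l2 : ceq (Mul (prod l1) (prod l2)) (prod (l1 ++ l2)).
Proof.
elim: l1 => [|z l IH] /=; first exact: ceq_1l.
apply: ceq_trans (ceq_assoc _ _ _) _.
apply: ceq_Mul => //; exact: ceq_refl.
Qed.

Lemma ceq_flat x : ceq x (prod (flat x)).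
Proof.
elim: x => [a||x IHx y IHy|x IHx] /=.
- apply: ceq_sym; exact: ceq_1r.
- exact: ceq_refl.
- apply: ceq_trans (ceq_prod_cat _ _); exact: ceq_Mul.
- apply: ceq_sym; exact: ceq_1r.
Qed.

Lemma flatE x y : flat x = flat y -> ceq x y.
Proof.
move=> e; apply: ceq_trans (ceq_flat x) _; rewrite e; apply: ceq_sym; exact: ceq_flat.
Qed.

Lemma repl (p x y q L R : cterm A) :
  flat L = flat (Mul (Mul p x) q) -> ceq x y -> ceq (Mul (Mul p y) q) R -> ceq L R.
Proof.
move=> e hxy hR; apply: (ceq_trans (flatE _ _ e)); apply: (ceq_trans _ hR).
apply: ceq_Mul; [apply: ceq_Mul|]; (exact: ceq_refl || exact: hxy).
Qed.

Lemma h1 : ceq (hC 1) (One A).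
Proof.
have e := ceq_rel1 (@unitr1 A) (@unitr1 A); rewrite mulr1 in e.
set h := hC 1 in e *.
apply: (ceq_trans _ (ceq_Vr h)); apply: ceq_sym.
apply: (repl (One A) h (Mul h h) (Inv h)) => //; first exact: ceq_sym.
apply: (repl h (Mul h (Inv h)) (One A) (One A)); first by [].
  exact: ceq_Vr.
exact: flatE.
Qed.

Lemma hinv (u : A) : u \is a GRing.unit -> ceq (hC u^-1) (Inv (hC u)).
Proof.
move=> hu; have hv : u^-1 \is a GRing.unit by rewrite unitrV.
have e := ceq_rel1 hv hu; rewrite mulVr // in e.
apply: (repl (hC u^-1) (One A) (Mul (hC u) (Inv (hC u))) (One A)); first by [].
  apply: ceq_sym; exact: ceq_Vr.
apply: (repl (One A) (Mul (hC u^-1) (hC u)) (One A) (Inv (hC u))); first by [].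
  exact: (ceq_trans e h1).
exact: flatE.
Qed.

Lemma eprodS n (f : 'I_n -> A) m (h : (m < n)%N) :
  eprod f m.+1 = Mul (Eps (f (Ordinal h))) (eprod f m).
Proof. by rewrite /= insubT. Qed.

End Aux.
Arguments eprodS {A n} f {m} h.
Arguments repl {A}.
Arguments interp {A}.
Arguments mmul {A}.
Arguments mE {A}.
Arguments h1 {A}.
Arguments hinv {A}.
Arguments flatE {A}.
Arguments mE_inj {A}.
Arguments det_interp {A}.
Arguments interp_sound {A x y}.

Theorem proposition4p6 (A : comUnitRingType) (n : nat) (a : 'I_n -> A)
    (u : A) (b : A) (hu : u \is a GRing.unit) :
  let beta := Mul (hC u) (yC (u * b)) in
  let P := fun bs : 'I_n -> A =>
    forall k : 'I_n,
      ceq (eprod bs k.+1)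
          (Mul (Mul (if ~~ odd k then hC u else Inv (hC u)) (eprod a k.+1)) beta) in
  (exists bs : 'I_n -> A, P bs) /\
  (forall bs : 'I_n -> A, P bs ->
     forall k : 'I_n,
       bs k = (if val k == 0%N then a k * u ^+ 2 + b * u
               else (if ~~ odd k then u ^+ 2 else (u^-1) ^+ 2) * a k)).
Proof.
move=> beta P.
pose bs0 : 'I_n -> A := fun k => if val k == 0%N then a k * u ^+ 2 + b * u
               else (if ~~ odd k then u ^+ 2 else (u^-1) ^+ 2) * a k.
pose S (m : nat) := if ~~ odd m then hC u else Inv (hC u).
have hv : u^-1 \is a GRing.unit by rewrite unitrV.
have key : forall m (hm : (m < n)%N),
    ceq (eprod bs0 m.+1) (Mul (Mul (S m) (eprod a m.+1)) beta).
  elim=> [|m IH] hm.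
    rewrite (eprodS bs0 hm) (eprodS a hm) /S /= /bs0 /=.
    set a0 := a _; apply: ceq_sym.
    apply: (repl (One A) (Mul (Mul (hC u) (Eps a0)) (hC u)) (Eps (u^+2 * a0)) (yC (u * b))); first by [].
      exact: ceq_rel3.
    apply: (repl (One A) (Mul (Mul (Eps (u^+2 * a0)) (Eps 0)) (Eps 0)) (Mul (hC (-1)) (Eps (u^+2 * a0 + 0))) (Mul (Eps 0) (Eps (u * b)))); first by [].
      exact: ceq_rel2.
    apply: (repl (hC (-1)) (Mul (Mul (Eps (u^+2 * a0 + 0)) (Eps 0)) (Eps (u * b))) (Mul (hC (-1)) (Eps (u^+2 * a0 + 0 + u * b))) (One A)); first by [].
      exact: ceq_rel2.
    apply: (repl (One A) (Mul (hC (-1)) (hC (-1))) (hC 1) (Mul (Eps (u^+2 * a0 + 0 + u * b)) (One A))); first by [].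
      have := ceq_rel1 (@unitrN1 A) (@unitrN1 A); by rewrite mulrNN mulr1.
    apply: (repl (One A) (hC 1) (One A) (Mul (Eps (u^+2 * a0 + 0 + u * b)) (One A))); first by [].
      exact: h1.
    have -> : u^+2 * a0 + 0 + u * b = a0 * u^+2 + b * u by ring.
    exact: flatE.
  have hm' : (m < n)%N by apply: ltnW.
  have sw : ceq (Mul (Eps (bs0 (Ordinal hm))) (S m)) (Mul (S m.+1) (Eps (a (Ordinal hm)))).
    rewrite /S /bs0 /=; set ak := a _.
    case: (boolP (odd m)) => om /=.
      apply: (repl (One A) (Eps (u^+2 * ak)) (Mul (Mul (hC u) (Eps ak)) (hC u)) (Inv (hC u))); first by [].
        apply: ceq_sym; exact: ceq_rel3.
      apply: (repl (Mul (hC u) (Eps ak)) (Mul (hC u) (Inv (hC u))) (One A) (One A)); first by [].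
        exact: ceq_Vr.
      exact: flatE.
    apply: (repl (One A) (Eps (u^-1^+2 * ak)) (Mul (Mul (hC u^-1) (Eps ak)) (hC u^-1)) (hC u)); first by [].
      apply: ceq_sym; exact: ceq_rel3.
    apply: (repl (Mul (hC u^-1) (Eps ak)) (Mul (hC u^-1) (hC u)) (One A) (One A)); first by [].
      have := ceq_rel1 hv hu; rewrite mulVr // => e; exact: (ceq_trans e h1).
    apply: (repl (One A) (hC u^-1) (Inv (hC u)) (Mul (Eps ak) (One A))); first by [].
      exact: hinv.
    exact: flatE.
  have IH' := IH hm'.
  rewrite (eprodS bs0 hm) (eprodS a hm).
  move: (eprod bs0 m.+1) (eprod a m.+1) (S m) (S m.+1) (Eps (bs0 _)) (Eps (a _)) IH' sw
    => Y X s0 s1 eb ea IH' sw.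
  apply: (repl eb Y (Mul (Mul s0 X) beta) (One A)); first by rewrite /= ?cats0 -?catA /= ?cats0.
    exact: IH'.
  apply: (repl (One A) (Mul eb s0) (Mul s1 ea) (Mul X beta)); first by rewrite /= ?cats0 -?catA /= ?cats0.
    exact: sw.
  apply: flatE; by rewrite /= ?cats0 -?catA /= ?cats0.
split.
  by exists bs0 => k; exact: (key k (ltn_ord k)).
move=> bs Pbs k.
have Hm : forall m (hm : (m < n)%N), interp (eprod bs m.+1) = interp (eprod bs0 m.+1).
  move=> m hm; have := Pbs (Ordinal hm); have := key m hm.
  by move/interp_sound => -> /interp_sound ->.
suff -> : bs k = bs0 k by [].
case: k => m hm.
have e : mmul (mE (bs (Ordinal hm))) (interp (eprod bs m)) =
         mmul (mE (bs0 (Ordinal hm))) (interp (eprod bs0 m)).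
  move: (Hm m hm); rewrite (eprodS bs hm) (eprodS bs0 hm); exact: id.
have e2 : interp (eprod bs m) = interp (eprod bs0 m).
  case: m hm {e} => [|m'] hm //; exact: Hm m' (ltnW hm).
rewrite -e2 in e.
exact: (mE_inj _ _ _ e (det_interp _)).
Qed.
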